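(* Let $1\le q<p$, $k\in\mathbb{N}$, and $x\in\mathbb{R}^n\setminus\{0\}$. (1) Let $\varepsilon>0$. If $x$ is $(k,\varepsilon)$-$\ell_p$-compressible, then $\Delta_{q,p}(x)\ge\frac{1}{(k/n)^{1/q-1/p}+\varepsilon}$. (2) The vector $x$ is $\left(k,\frac{(n/k)^{1/q}}{\Delta_{q,p}(x)}\right)$-$\ell_p$-compressible. In particular, if a subspace $X\subseteq\mathbb{R}^n$ is $(k,\varepsilon)$-$\ell_p$-spread, then $\Delta_{q,p}(X)\le\frac{1}{\varepsilon}\left(\frac{n}{k}\right)^{1/q}$ for all $1\le q<p$.
   Context: A vector $y$ is $k$-sparse if $|\mathrm{supp}(y)|\le k$. A nonzero $x$ is $(k,\varepsilon)$-$\ell_p$-compressible if some $k$-sparse $y$ has $\|x-y\|_p\le\varepsilon\|x\|_p$, and $(k,\varepsilon)$-$\ell_p$-spread otherwise; a subspace is $(k,\varepsilon)$-$\ell_p$-spread if all its nonzero vectors are. For nonzero $x\in\mathbb{R}^n$, $\Delta_{q,p}(x):=\frac{\|x\|_p\, n^{1/q-1/p}}{\|x\|_q}$, and for a subspace $X$, $\Delta_{q,p}(X):=\sup\{\Delta_{q,p}(x):x\in X\setminus\{0\}\}$. *)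

(* Defs.v *)
From HB Require Import structures.
From mathcomp Require Import all_boot all_order all_algebra.
From mathcomp Require Import all_classical all_reals.
From mathcomp Require Import ereal exp.
Set Implicit Arguments. Unset Strict Implicit. Unset Printing Implicit Defensive.
Import Order.TTheory GRing.Theory Num.Theory.
Local Open Scope ring_scope.
Local Open Scope classical_set_scope.

Section Defs.
Variables (R : realType) (n : nat).

Definition lpnorm (p : R) (x : 'rV[R]_n) : R :=
  (\sum_(i < n) `|x 0 i| `^ p) `^ p^-1.

Definition supp (y : 'rV[R]_n) : {set 'I_n} := [set i | y 0 i != 0].

Definition sparse (k : nat) (y : 'rV[R]_n) : Prop := (#|supp y| <= k)%N.

Definition compressible (p : R) (k : nat) (eps : R) (x : 'rV[R]_n) : Prop :=
  x != 0 /\ exists y, sparse k y /\ lpnorm p (x - y) <= eps * lpnorm p x.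

Definition spread (p : R) (k : nat) (eps : R) (x : 'rV[R]_n) : Prop :=
  x != 0 /\ ~ compressible p k eps x.

Definition spread_subspace (p : R) (k : nat) (eps : R) (X : {vspace 'rV[R]_n}) : Prop :=
  forall x, x \in X -> x != 0 -> spread p k eps x.

Definition Delta (q p : R) (x : 'rV[R]_n) : R :=
  lpnorm p x * n%:R `^ (q^-1 - p^-1) / lpnorm q x.

Definition Delta_subspace (q p : R) (X : {vspace 'rV[R]_n}) : \bar R :=
  ereal_sup [set (Delta q p x)%:E | x in [set x | x \in X /\ x != 0]].

End Defs.

(* Main.v *)
Require Import Defs.
From HB Require Import structures.
From mathcomp Require Import all_boot all_order all_algebra.
From mathcomp Require Import all_classical all_reals.
From mathcomp Require Import ereal exp.
From mathcomp Require Import ring lra.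
Import Order.TTheory GRing.Theory Num.Theory.
Set Implicit Arguments. Unset Strict Implicit. Unset Printing Implicit Defensive.
Local Open Scope ring_scope.

Section H.
Variable R : realType.

Lemma powRK (a r : R) : 0 <= a -> r != 0 -> (a `^ r^-1) `^ r = a.
Proof. by move=> a0 r0; rewrite -powRrM mulVf // powRr1. Qed.

Lemma powRK' (a r : R) : 0 <= a -> r != 0 -> (a `^ r) `^ r^-1 = a.
Proof. by move=> a0 r0; rewrite -powRrM mulfV // powRr1. Qed.

Lemma superadd (a b q : R) : 0 <= a -> 0 <= b -> 1 <= q ->
  (a + b) `^ q^-1 <= a `^ q^-1 + b `^ q^-1.
Proof.
move=> a0 b0 q1; have q0 : 0 < q by lra.
set A := a `^ q^-1; set B := b `^ q^-1.
have A0 : 0 <= A by apply: powR_ge0.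
have B0 : 0 <= B by apply: powR_ge0.
have -> : a + b = A `^ q + B `^ q by rewrite !powRK // gt_eqF.
have h : A `^ q + B `^ q <= (A + B) `^ q.
  rewrite -(mulr_powRB1 A0 q0) -(mulr_powRB1 B0 q0).
  rewrite -(@mulr_powRB1 _ (A + B)) ?addr_ge0 // mulrDl.
  apply: lerD; apply: ler_wpM2l => //; apply: ge0_ler_powR; rewrite ?nnegrE; lra.
rewrite -[A + B](@powRK' _ q) ?addr_ge0 ?gt_eqF //.
apply: ge0_ler_powR; rewrite ?nnegrE ?invr_ge0 ?addr_ge0 ?powR_ge0 //.
exact: ltW q0.
Qed.
Lemma holder_sum n (c : 'I_n -> R) (r : R) (T : {set 'I_n}) :
  (forall i, 0 <= c i) -> 1 < r ->
  \sum_(i in T) c i <= #|T|%:R `^ (1 - r^-1) * (\sum_(i in T) c i `^ r) `^ r^-1.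
Proof.
move=> c0 r1; have r0 : 0 < r by lra.
set Sr := \sum_(i in T) c i `^ r.
have Sr0 : 0 <= Sr by apply: sumr_ge0 => i _; apply: powR_ge0.
set A := Sr `^ r^-1.
have [A0|Apos] := eqVneq A 0.
  have : Sr = 0 by move/powR_eq0_eq0: A0.
  move/eqP; rewrite psumr_eq0; last by move=> i _; apply: powR_ge0.
  move/allP => h; rewrite big1 ?mulr_ge0 ?powR_ge0 // => i iT.
  have /h : i \in index_enum 'I_n by rewrite mem_index_enum.
  by rewrite iT /= => /eqP /powR_eq0_eq0.
have Agt0 : 0 < A by rewrite lt_def Apos powR_ge0.
have [m0|mpos] := eqVneq #|T| 0%N.
  by rewrite big_pred0 ?mulr_ge0 ?powR_ge0 // => i; apply/negP => iT; move/card0_eq: m0 => /(_ i); rewrite iT.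
set m := #|T|%:R.
have m0 : 0 < m by rewrite ltr0n lt0n.
set s := (1 - r^-1)^-1.
have rinv1 : r^-1 < 1 by rewrite invf_lt1.
have s0 : 0 < s by rewrite invr_gt0 subr_gt0.
have rs : r^-1 + s^-1 = 1 by rewrite invrK; ring.
set u := (m `^ (1 - r^-1))^-1.
have u0 : 0 <= u by rewrite invr_ge0 powR_ge0.
have us : u `^ s = m^-1.
  by rewrite /u -powRN -powRrM /s mulNr mulfV ?gt_eqF ?subr_gt0 // powR_inv1 // ltW.
have key : forall i, i \in T -> (c i / A) * u <= c i `^ r / (Sr * r) + m^-1 / s.
  move=> i _; rewrite -us.
  have -> : c i `^ r / (Sr * r) = (c i / A) `^ r / r.
    rewrite powRM ?invr_ge0 ?powR_ge0 // -powRN.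
    rewrite /A -powRrM mulNr mulVf ?gt_eqF // powRN powRr1 //.
    by rewrite invfM mulrA.
  by apply: conjugate_powR => //; apply: divr_ge0 => //; apply: ltW.
have : \sum_(i in T) (c i / A * u) <= \sum_(i in T) (c i `^ r / (Sr * r) + m^-1 / s) by apply: ler_sum.
rewrite -big_distrl -big_distrl /= big_split /= -big_distrl /= -big_distrr /=.
rewrite sumr_const -/m.
have -> : m^-1 * (s^-1 *+ #|T|) = s^-1 by rewrite -mulr_natr -/m mulrCA mulVf ?gt_eqF // mulr1.
have Sr_ne : Sr != 0 by apply: contra Apos => /eqP e; rewrite /A e powR0 // invr_neq0 // gt_eqF.
rewrite -/Sr.
have -> : Sr / (Sr * r) = r^-1 by rewrite invfM mulrA mulfV // mul1r.
rewrite rs /u => h.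
have P0 : 0 < m `^ (1 - r^-1) by rewrite powR_gt0.
by move: h; rewrite ler_pdivrMr // mul1r ler_pdivrMr.
Qed.
Section L.
Variable n : nat.
Implicit Types (x y : 'rV[R]_n).

Lemma lpnorm_ge0 p x : 0 <= lpnorm p x.
Proof. exact: powR_ge0. Qed.

Lemma sum_ge0 p (T : {set 'I_n}) x : 0 <= \sum_(i in T) `|x 0 i| `^ p.
Proof. by apply: sumr_ge0 => i _; apply: powR_ge0. Qed.

Lemma lpnorm_gt0 p x : 0 < p -> x != 0 -> 0 < lpnorm p x.
Proof.
move=> p0 x0; apply: powR_gt0.
have [i xi] : exists i, x 0 i != 0.
  apply/existsP; apply: contraR x0 => /existsPn h; apply/eqP/rowP => j.
  by rewrite mxE; move: (h j); rewrite negbK => /eqP.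
rewrite (bigD1 i) //= ltr_pwDl //; first by apply: powR_gt0; rewrite normr_gt0.
by apply: sumr_ge0 => j _; apply: powR_ge0.
Qed.

Lemma restr_ineq q p (T : {set 'I_n}) x : 1 <= q -> q < p ->
  (\sum_(i in T) `|x 0 i| `^ q) `^ q^-1 <=
  #|T|%:R `^ (q^-1 - p^-1) * (\sum_(i in T) `|x 0 i| `^ p) `^ p^-1.
Proof.
move=> q1 qp; have q0 : 0 < q := lt_le_trans ltr01 q1. have p0 : 0 < p := lt_trans q0 qp.
have r1 : 1 < p / q by rewrite ltr_pdivlMr // mul1r.
have := @holder_sum n (fun i => `|x 0 i| `^ q) (p / q) T (fun i => powR_ge0 _ _) r1.
have e : \sum_(i in T) (`|x 0 i| `^ q) `^ (p/q) = \sum_(i in T) `|x 0 i| `^ p.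
  by apply: eq_bigr => i _; rewrite -powRrM mulrCA mulfV ?gt_eqF // mulr1.
rewrite /= e => h.
have hy : #|T|%:R `^ (1 - (p / q)^-1) * (\sum_(i in T) `|x 0 i| `^ p) `^ (p / q)^-1 \is Num.nneg.
  by rewrite nnegrE mulr_ge0 ?powR_ge0.
have hx : \sum_(i in T) `|x 0 i| `^ q \is Num.nneg by rewrite nnegrE sum_ge0.
have qi0 : 0 <= q^-1 by rewrite invr_ge0 ltW.
have := ge0_ler_powR qi0 hx hy h.
rewrite /= powRM ?powR_ge0 // -!powRrM.
have -> : (1 - (p / q)^-1) * q^-1 = q^-1 - p^-1 by field; rewrite !gt_eqF.
have -> : (p / q)^-1 * q^-1 = p^-1 by field; rewrite !gt_eqF.
by [].
Qed.
End L.
Lemma powRV (x r : R) : 0 <= x -> x^-1 `^ r = (x `^ r)^-1.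
Proof. by move=> x0; rewrite -powR_inv1 // -powRrM mulN1r powRN. Qed.

Lemma powR_mono (r a b : R) : 0 <= r -> 0 <= a -> a <= b -> a `^ r <= b `^ r.
Proof. move=> r0 a0 ab; apply: ge0_ler_powR => //; rewrite nnegrE //; exact: le_trans ab. Qed.

Section P1.
Variable n : nat.
Implicit Types (x y : 'rV[R]_n).

Lemma nz_exists x : x != 0 -> exists i, x 0 i != 0.
Proof.
move=> x0; apply/existsP; apply: contraR x0 => /existsPn h; apply/eqP/rowP => j.
by rewrite mxE; move: (h j); rewrite negbK => /eqP.
Qed.

Lemma nz_n x : x != 0 -> (0 < n)%N.
Proof. by move/nz_exists => [i _]; apply: leq_ltn_trans (ltn_ord i). Qed.

Lemma split_sum (S : {set 'I_n}) (F : 'I_n -> R) :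
  \sum_(i < n) F i = \sum_(i in S) F i + \sum_(i in ~: S) F i.
Proof.
rewrite (bigID (mem S)) /=; congr (_ + _); apply: eq_bigl => i.
by rewrite finset.in_setC.
Qed.

Lemma sub_le (S : {set 'I_n}) p x : 0 < p ->
  (\sum_(i in S) `|x 0 i| `^ p) `^ p^-1 <= lpnorm p x.
Proof.
move=> p0; apply: powR_mono; [by rewrite invr_ge0 ltW | exact: sum_ge0 | ].
by rewrite (split_sum S) lerDl sum_ge0.
Qed.
Lemma part1 q p k x eps : 1 <= q -> q < p -> x != 0 -> 0 < eps ->
  compressible p k eps x ->
  1 / ((k%:R / n%:R) `^ (q^-1 - p^-1) + eps) <= Delta q p x.
Proof.
move=> q1 qp x0 e0 [_ [y [sy hy]]].
have q0 : 0 < q := lt_le_trans ltr01 q1. have p0 : 0 < p := lt_trans q0 qp.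
set S := supp y; set a := q^-1 - p^-1.
have a0 : 0 < a by rewrite subr_gt0 ltf_pV2 ?posrE.
have n0 : (0 < n)%N by apply: nz_n x0.
set Np := lpnorm p x; set Nq := lpnorm q x.
have Np0 : 0 < Np by apply: lpnorm_gt0.
have Nq0 : 0 < Nq by apply: lpnorm_gt0.
set K := k%:R `^ a; set N := n%:R `^ a.
have K0 : 0 <= K by apply: powR_ge0.
have N0 : 0 < N by apply: powR_gt0; rewrite ltr0n.
have claim : Nq <= Np * (K + eps * N).
  have s1 : Nq <= (\sum_(i in S) `|x 0 i| `^ q) `^ q^-1 + (\sum_(i in ~: S) `|x 0 i| `^ q) `^ q^-1.
    by rewrite /Nq /lpnorm (split_sum S) superadd ?sum_ge0.
  apply: (le_trans s1); rewrite mulrDr; apply: lerD.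
    apply: (le_trans (restr_ineq S x q1 qp)); rewrite mulrC; apply: ler_pM.
    - exact: powR_ge0.
    - exact: powR_ge0.
    - exact: sub_le p0.
    - apply: powR_mono; [exact: ltW | exact: ler0n | rewrite ler_nat; exact: sy].
  apply: (le_trans (restr_ineq (~: S) x q1 qp)); rewrite mulrC.
  have -> : Np * (eps * N) = (eps * Np) * N by ring.
  apply: ler_pM.
  - exact: powR_ge0.
  - exact: powR_ge0.
  - apply: le_trans hy.
    have -> : \sum_(i in ~: S) `|x 0 i| `^ p = \sum_(i in ~: S) `|(x - y) 0 i| `^ p.
      apply: eq_bigr => i; rewrite /S /supp finset.in_setC inE negbK => /eqP yi.
      by rewrite !mxE yi subr0.
    exact: sub_le p0.
  - apply: powR_mono; [exact: ltW | exact: ler0n | rewrite ler_nat].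
    by apply: leq_trans (max_card _) _; rewrite card_ord.
rewrite /Delta -/Np -/Nq -/a powRM ?invr_ge0 // powRV // -/K -/N.
rewrite ler_pdivrMr; last by apply: ltr_wpDl => //; apply: divr_ge0 => //; exact: ltW.
have -> : Np * N / Nq * (K / N + eps) = Np * (K + eps * N) / Nq.
  by field; rewrite !gt_eqF.
by rewrite ler_pdivlMr // mul1r.
Qed.
End P1.
Section P2.
Variable n : nat.
Implicit Types (x y : 'rV[R]_n).

Lemma sumall_ge0 p x : 0 <= \sum_(i < n) `|x 0 i| `^ p.
Proof. by apply: sumr_ge0 => i _; apply: powR_ge0. Qed.

Lemma part2 q p k x : 1 <= q -> q < p -> x != 0 -> (0 < k)%N ->
  compressible p k ((n%:R / k%:R) `^ q^-1 / Delta q p x) x.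
Proof.
move=> q1 qp x0 k0; split => //.
have q0 : 0 < q := lt_le_trans ltr01 q1. have p0 : 0 < p := lt_trans q0 qp.
have n0 : (0 < n)%N by apply: nz_n x0.
set Np := lpnorm p x; set Nq := lpnorm q x.
have Np0 : 0 < Np by apply: lpnorm_gt0.
have Nq0 : 0 < Nq by apply: lpnorm_gt0.
have kR0 : 0 < k%:R :> R by rewrite ltr0n.
have nR0 : 0 < n%:R :> R by rewrite ltr0n.
set K1 := k%:R `^ q^-1.
have K10 : 0 < K1 by apply: powR_gt0.
set t := Nq / K1.
have t0 : 0 < t by apply: divr_gt0.
set T := [set i | t < `|x 0 i|].
pose y := \row_i (if i \in T then x 0 i else 0).
exists y; split.
  rewrite /sparse.
  have h1 : (#|supp y| <= #|T|)%N.
    apply: subset_leq_card; apply/fintype.subsetP => i; rewrite /supp inE mxE.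
    by case: (i \in T) => //; rewrite eqxx.
  apply: leq_trans h1 _.
  set Q := Nq `^ q.
  have Q0 : 0 < Q by apply: powR_gt0.
  have hQ : Q = \sum_(i < n) `|x 0 i| `^ q.
    rewrite /Q /Nq /lpnorm powRK //; [exact: sumall_ge0 | exact: lt0r_neq0].
  have ht : t `^ q = Q / k%:R.
    rewrite /t powRM; [| exact: ltW Nq0 | by rewrite invr_ge0 ltW].
    rewrite powRV; last exact: ltW.
    by rewrite /K1 (@powRK k%:R q) // ?ler0n ?(lt0r_neq0 q0).
  have h2 : \sum_(i in T) t `^ q <= \sum_(i in T) `|x 0 i| `^ q.
    apply: ler_sum => i; rewrite inE => /ltW h; apply: powR_mono => //.
    - exact: ltW.
    - exact: ltW.
  have h3 : \sum_(i in T) `|x 0 i| `^ q <= Q by rewrite hQ (split_sum T) lerDl sum_ge0.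
  have := le_trans h2 h3; rewrite sumr_const ht -(mulr_natr (Q / k%:R)) mulrAC ler_pdivrMr //.
  by rewrite ler_pM2l // ler_nat.
have hxy : forall i, (x - y) 0 i = if i \in T then 0 else x 0 i.
  by move=> i; rewrite !mxE; case: ifP => _; rewrite ?subrr ?subr0.
have hb : forall i, `|(x - y) 0 i| `^ p <= t `^ p.
  move=> i; rewrite hxy; case: ifP => iT.
    by rewrite normr0 powR0 ?gt_eqF // powR_ge0.
  apply: powR_mono; [exact: ltW | exact: normr_ge0 |].
  by move: iT; rewrite inE => /negbT; rewrite -leNgt.
have hs : \sum_(i < n) `|(x - y) 0 i| `^ p <= t `^ p * n%:R.
  have -> : t `^ p * n%:R = \sum_(i < n) t `^ p by rewrite sumr_const card_ord mulr_natr.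
  by apply: ler_sum => i _; exact: hb.
have hl : lpnorm p (x - y) <= t * n%:R `^ p^-1.
  apply: (le_trans (powR_mono (ltW (eqbRL (invr_gt0 _) p0)) (sumall_ge0 _ _) hs)).
  by rewrite powRM ?powR_ge0 ?ler0n // powRK' ?gt_eqF // ltW.
apply: (le_trans hl) => {hl hs hb hxy}.
rewrite /Delta -/Np -/Nq.
have -> : (n%:R / k%:R) `^ q^-1 = n%:R `^ q^-1 / K1.
  by rewrite powRM ?invr_ge0 ?ler0n // powRV ?ler0n.
rewrite powRB; last by rewrite pnatr_eq0 -lt0n n0 implybT.
have N10 : 0 < n%:R `^ q^-1 :> R by apply: powR_gt0.
have N20 : 0 < n%:R `^ p^-1 :> R by apply: powR_gt0.
rewrite le_eqVlt; apply/orP; left; apply/eqP.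
rewrite /t.
move: (lt0r_neq0 Nq0) (lt0r_neq0 N10) (lt0r_neq0 N20) (lt0r_neq0 Np0) (lt0r_neq0 K10).
clearbody Np Nq K1.
move: (n%:R `^ q^-1) (n%:R `^ p^-1) => N1 N2 h1 h2 h3 h4 h5.
field.
by rewrite h1 h2 h3 h4 h5.
Qed.
End P2.
End H.

Unset Implicit Arguments.

Theorem proposition3p11 (R : realType) (n : nat) (q p : R) (k : nat)
  (x : 'rV[R]_n) (hq : 1 <= q) (hqp : q < p) (hx : x != 0) :
  (forall eps : R, 0 < eps -> compressible p k eps x ->
     Delta q p x >= 1 / ((k%:R / n%:R) `^ (q^-1 - p^-1) + eps))
  /\ ((0 < k)%N ->
     compressible p k ((n%:R / k%:R) `^ q^-1 / Delta q p x) x)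
  /\ (forall (eps : R) (X : {vspace 'rV[R]_n}), (0 < k)%N -> 0 < eps ->
     spread_subspace p k eps X ->
     forall q' : R, 1 <= q' -> q' < p ->
     (Delta_subspace q' p X <= (eps^-1 * (n%:R / k%:R) `^ q'^-1)%:E)%E).
Proof.
split; first by move=> eps e0 hc; apply: part1 hq hqp hx e0 hc.
split; first by move=> k0; apply: part2 hq hqp hx k0.
move=> eps X k0 e0 hX q' q1' qp'.
apply: ub_ereal_sup => _ [z [zX z0] <-].
rewrite lee_fin.
have n0 : (0 < n)%N by apply: nz_n z0.
have q0 : 0 < q' := lt_le_trans ltr01 q1'.
have p0 : 0 < p := lt_trans q0 qp'.
have D0 : 0 < Delta q' p z.
  rewrite /Delta; apply: divr_gt0; last by apply: lpnorm_gt0.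
  apply: mulr_gt0; first by apply: lpnorm_gt0.
  by apply: powR_gt0; rewrite ltr0n.
rewrite leNgt; apply/negP => hlt.
have [_ [y [sy hy]]] := part2 q1' qp' z0 k0.
have := hX z zX z0; rewrite /spread => -[_ nc].
apply: nc; split => //; exists y; split => //.
apply: (le_trans hy); apply: ler_wpM2r; first exact: lpnorm_ge0.
rewrite ler_pdivrMr //; apply: ltW.
by rewrite (mulrC eps); move: hlt; rewrite (mulrC eps^-1) ltr_pdivrMr.
Qed.
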